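(* Let $\mathsf{A}\subset GL_2(\mathbb{R})$ be such that $\mathsf{A}$ has an invariant unstable multicone $\mathcal{C}$ and $\mathcal{S}(\mathsf{A})$ does not contain parabolic elements. Let $\mathsf{A}_e$ be the collection of all conformal elements of $\mathsf{A}$. Then $A_1F_1\cdots A_nF_n\mathcal{C}\subset\mathcal{C}^o$ for all $n\ge(\#\partial\mathcal{C})^2+1$, all $A_1,\ldots,A_n\in\mathsf{A}\setminus\mathsf{A}_e$, and all $F_1,\ldots,F_n\in\mathcal{F}(\mathsf{A})$.
   Context: $\mathcal{S}(\mathsf{B})$ denotes the semigroup of finite products of elements of $\mathsf{B}$, and $\mathcal{F}(\mathsf{A})=\mathcal{S}(\{|\det A|^{-1/2}A: A\in\mathsf{A}_e\})$. A matrix is conformal if its two eigenvalues have equal absolute value; parabolic if it has only one eigenspace; proximal if it has real eigenvalues of distinct absolute value, with $u(A)$, $s(A)$ the eigenspaces for the eigenvalue of larger/smaller absolute value. $\mathbb{RP}^1$ is the real projective line; a multicone is a proper subset of $\mathbb{RP}^1$ that is a finite union of closed projective intervals; $\mathcal{C}^o$ is its interior and $\partial\mathcal{C}$ its boundary; invariant means $A\mathcal{C}\subset\mathcal{C}$ for all $A\in\mathsf{A}$. $X_u(\mathsf{A})=\overline{\{u(A):A\in\mathcal{S}(\mathsf{A})\text{ proximal}\}}$, $X_s(\mathsf{A})=\overline{\{s(A):A\in\mathcal{S}(\mathsf{A})\text{ proximal}\}}$. A multicone $\mathcal{C}$ is an unstable multicone for $\mathsf{A}$ if $\mathcal{S}(\mathsf{A})$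 contains a proximal element, $\mathcal{C}\cap X_s(\mathsf{A})=\emptyset$, $\partial\mathcal{C}\cap X_u(\mathsf{A})=\emptyset$, and each connected component of $\mathcal{C}$ meets $X_u(\mathsf{A})$. *)

(* Defs.v *)
(* A point of RP^1 is represented by any nonzero
   column vector spanning the line; subsets of RP^1 are represented by
   predicates on vectors which hold only for nonzero vectors and are
   invariant under nonzero scaling. *)
From HB Require Import structures.
From mathcomp Require Import all_boot all_order all_algebra.
From mathcomp Require Import reals complex.
Set Implicit Arguments. Unset Strict Implicit. Unset Printing Implicit Defensive.
Import Order.TTheory GRing.Theory Num.Theory.
Local Open Scope ring_scope.
Local Open Scope complex_scope.

Section Defs.
Variable R : realType.

Definition vec := 'cV[R]_2.
Definition mat := 'M[R]_2.
Definition pset := vec -> Prop.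

Definition collinear (v w : vec) : Prop := \det (row_mx v w) = 0.

Definition dot (v w : vec) : R := (v^T *m w) 0 0.

(* squared sine of the angle between the lines [v] and [w]; it is a
   pseudometric-equivalent of the standard metric on RP^1 and defines
   the usual topology of RP^1 on nonzero vectors *)
Definition pdist (v w : vec) : R := (\det (row_mx v w)) ^+ 2 / (dot v v * dot w w).

Definition popen (U : pset) : Prop :=
  forall v, U v -> v != 0 /\ exists2 e : R, 0 < e &
     forall w, w != 0 -> pdist v w < e -> U w.

Definition pinterior (S : pset) : pset := fun v =>
  v != 0 /\ exists2 e : R, 0 < e & forall w, w != 0 -> pdist v w < e -> S w.

Definition pclosure (S : pset) : pset := fun v =>
  v != 0 /\ forall e : R, 0 < e -> exists w, [/\ S w, w != 0 & pdist v w < e].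

Definition pboundary (S : pset) : pset := fun v =>
  pclosure S v /\ ~ pinterior S v.

Definition pconnected (S : pset) : Prop :=
  ~ exists U V : pset, [/\ popen U /\ popen V,
      (forall v, S v -> U v \/ V v),
      (exists v, S v /\ U v), (exists v, S v /\ V v) &
      (forall v, ~ [/\ S v, U v & V v])].

Definition same_component (S : pset) (v w : vec) : Prop :=
  exists K : pset, [/\ pconnected K, (forall x, K x -> S x), K v & K w].

Definition pinterval (p q : vec) : pset := fun v =>
  v != 0 /\ exists s t : R, [/\ 0 <= s, 0 <= t &
     (v = s *: p + t *: q \/ - v = s *: p + t *: q)].

Definition multicone (C : pset) : Prop :=
  (exists s : seq (vec * vec),
     (forall pq, pq \in s -> pq.1 != 0 /\ pq.2 != 0 /\ ~ collinear pq.1 pq.2) /\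
     (forall v, C v <-> exists2 pq, pq \in s & pinterval pq.1 pq.2 v)) /\
  (exists v : vec, v != 0 /\ ~ C v).

Definition pcard (S : pset) (k : nat) : Prop :=
  exists s : seq vec, [/\ size s = k,
     (forall v, v \in s -> S v),
     (forall i j, (i < k)%N -> (j < k)%N -> i <> j ->
         ~ collinear (nth 0 s i) (nth 0 s j)) &
     (forall v, S v -> exists2 w, w \in s & collinear v w)].

Inductive semigroup (B : mat -> Prop) : mat -> Prop :=
  | sg_gen A : B A -> semigroup B A
  | sg_mul A A' : semigroup B A -> semigroup B A' -> semigroup B (A *m A').

Definition ceig (A : mat) (l : R[i]) : bool :=
  eigenvalue (map_mx (fun x : R => x%:C) A) l.

Definition conformal (A : mat) : Prop :=
  forall l m : R[i], ceig A l -> ceig A m -> `|l| = `|m|.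

Definition real_eigvec (A : mat) (a : R) (v : vec) : Prop :=
  v != 0 /\ A *m v = a *: v.

Definition parabolic (A : mat) : Prop :=
  (exists v a, real_eigvec A a v) /\
  (forall v w a b, real_eigvec A a v -> real_eigvec A b w -> collinear v w).

Definition proximal (A : mat) : Prop :=
  exists a b : R, `|a| < `|b| /\
     (exists v, real_eigvec A a v) /\ (exists v, real_eigvec A b v).

Definition unstable_dir (A : mat) (v : vec) : Prop :=
  exists a b : R, [/\ `|a| < `|b|, (exists w, real_eigvec A a w) & real_eigvec A b v].
Definition stable_dir (A : mat) (v : vec) : Prop :=
  exists a b : R, [/\ `|a| < `|b|, real_eigvec A a v & (exists w, real_eigvec A b w)].

Definition Xu (Aset : mat -> Prop) : pset :=
  pclosure (fun v => exists2 B, semigroup Aset B & unstable_dir B v).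
Definition Xs (Aset : mat -> Prop) : pset :=
  pclosure (fun v => exists2 B, semigroup Aset B & stable_dir B v).

Definition minvariant (Aset : mat -> Prop) (C : pset) : Prop :=
  forall A v, Aset A -> C v -> C (A *m v).

Definition unstable_multicone (Aset : mat -> Prop) (C : pset) : Prop :=
  [/\ multicone C,
      (exists2 B, semigroup Aset B & proximal B),
      (forall v, ~ (C v /\ Xs Aset v)),
      (forall v, ~ (pboundary C v /\ Xu Aset v)) &
      (forall v, C v -> exists w, same_component C v w /\ Xu Aset w)].

Definition Aconf (Aset : mat -> Prop) : mat -> Prop :=
  fun A => Aset A /\ conformal A.

Definition Fset (Aset : mat -> Prop) : mat -> Prop :=
  semigroup (fun B => exists2 A, Aconf Aset A &
                B = (Num.sqrt `|\det A|)^-1 *: A).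

End Defs.

(* Main.v *)
Require Import Defs.
From HB Require Import structures.
From mathcomp Require Import all_boot all_order all_algebra.
From mathcomp Require Import reals complex.
From mathcomp Require Import ring lra.
From Stdlib Require Import Classical.
Import Order.TTheory GRing.Theory Num.Theory.
Local Open Scope ring_scope.

Set Implicit Arguments. Unset Strict Implicit. Unset Printing Implicit Defensive.

Section Toolkit.
Variable R : realType.
Implicit Types (a b u v w x y : 'cV[R]_2) (k : R) (S T B : 'M[R]_2).

Lemma ordI2 (i : 'I_2) : i = 0 \/ i = 1.
Proof. case: i => [[|[|m]]] H; [left|right|]; try by apply/val_inj. by []. Qed.

Lemma vecP2 v w : v 0 0 = w 0 0 -> v 1 0 = w 1 0 -> v = w.
Proof.
move=> h0 h1; apply/matrixP => i j; rewrite (ord1 j).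
by case: (ordI2 i) => ->.
Qed.

Lemma matP2 S T : S 0 0 = T 0 0 -> S 0 1 = T 0 1 -> S 1 0 = T 1 0 -> S 1 1 = T 1 1 -> S = T.
Proof.
move=> h1 h2 h3 h4; apply/matrixP => i j.
by case: (ordI2 i) => ->; case: (ordI2 j) => ->.
Qed.

Lemma vec_neq0 v : v != 0 -> v 0 0 != 0 \/ v 1 0 != 0.
Proof.
move=> hv; case: (eqVneq (v 0 0) 0) => h0; last by left.
case: (eqVneq (v 1 0) 0) => h1; last by right.
have hz : v = 0 by apply: vecP2; rewrite mxE ?h0 ?h1.
by rewrite hz eqxx in hv.
Qed.

Lemma neq0_vec v : (v 0 0 != 0 \/ v 1 0 != 0) -> v != 0.
Proof. by case=> h; apply: contraNneq h => ->; rewrite mxE. Qed.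

Lemma mulmxE2 m p (S : 'M[R]_(m, 2)) (M : 'M[R]_(2, p)) i j :
  (S *m M) i j = S i 0 * M 0 j + S i 1 * M 1 j.
Proof.
rewrite mxE !big_ord_recr big_ord0 /= add0r.
have -> : (widen_ord (leqnSn 1) ord_max : 'I_2) = 0 by apply/val_inj.
by have -> : (ord_max : 'I_2) = 1 by apply/val_inj.
Qed.

Lemma det2 (M : 'M[R]_2) : \det M = M 0 0 * M 1 1 - M 0 1 * M 1 0.
Proof.
rewrite (expand_det_row _ 0) !big_ord_recr big_ord0 /= add0r.
rewrite /cofactor !det_mx11 /= !mxE /=.
have -> : (widen_ord (leqnSn 1) ord_max : 'I_2) = 0 by apply/val_inj.
have -> : (lift 0 0 : 'I_2) = 1 by apply/val_inj.
have -> : (lift (ord_max : 'I_2) 0 : 'I_2) = 0 by apply/val_inj.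
have -> : (ord_max : 'I_2) = 1 by apply/val_inj.
rewrite !expr0 ?expr1 /=; ring.
Qed.

Lemma rowmx_l v w i : row_mx v w i 0 = v i 0.
Proof.
have -> : (0 : 'I_2) = lshift 1 (0 : 'I_1) by apply/val_inj.
by rewrite row_mxEl.
Qed.

Lemma rowmx_r v w i : row_mx v w i 1 = w i 0.
Proof.
have -> : (1 : 'I_2) = rshift 1 (0 : 'I_1) by apply/val_inj.
by rewrite row_mxEr.
Qed.

Lemma detrow v w : \det (row_mx v w) = v 0 0 * w 1 0 - v 1 0 * w 0 0.
Proof. rewrite det2 !rowmx_l !rowmx_r; ring. Qed.

Lemma dotE v : dot v v = v 0 0 ^+ 2 + v 1 0 ^+ 2.
Proof.
rewrite /dot mulmxE2 !mxE; ring.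
Qed.

Lemma sq_gt0 (x : R) : x != 0 -> 0 < x ^+ 2.
Proof. by move=> h; rewrite exprn_even_gt0 //= h orbT. Qed.

Lemma dot_gt0 v : v != 0 -> 0 < dot v v.
Proof.
move/vec_neq0 => h; rewrite dotE.
have h0 := sqr_ge0 (v 0 0); have h1 := sqr_ge0 (v 1 0).
case: h => /sq_gt0 h; lra.
Qed.

Lemma collinear_scale a b : collinear a b -> b != 0 -> exists k : R, a = k *: b.
Proof.
rewrite /collinear detrow => /eqP; rewrite subr_eq0 => /eqP h /vec_neq0 [] hb.
  exists (a 0 0 / b 0 0); apply: vecP2; rewrite !mxE ?divfK //.
  by rewrite mulrAC h mulfK.
exists (a 1 0 / b 1 0); apply: vecP2; rewrite !mxE ?divfK //.
by rewrite mulrAC -h mulfK.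
Qed.

Lemma collinear_smul a k : collinear (k *: a) a.
Proof. by rewrite /collinear detrow !mxE; ring. Qed.

Lemma collinear_trans a b u : collinear a u -> collinear b u -> u != 0 -> collinear a b.
Proof.
move=> ha hb hu; have [k ->] := collinear_scale ha hu; have [l ->] := collinear_scale hb hu.
by rewrite /collinear detrow !mxE; ring.
Qed.

Lemma collinear_sym a b : collinear a b -> collinear b a.
Proof.
rewrite /collinear !detrow => h.
by transitivity (- (a 0 0 * b 1 0 - a 1 0 * b 0 0)); [ring | rewrite h oppr0].
Qed.

Lemma pdist_self v : pdist v v = 0.
Proof. by rewrite /pdist detrow (mulrC (v 1 0)) subrr expr0n /= mul0r. Qed.

Lemma mulmx_neq0 B v : \det B != 0 -> v != 0 -> B *m v != 0.
Proof.
move=> hB hv; apply: contraNneq hv => h.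
have hu : B \in unitmx by rewrite unitmxE unitfE.
by rewrite -(mulKmx hu v) h mulmx0.
Qed.

Lemma cs2 (a b x y : R) : (a * x + b * y) ^+ 2 <= (a ^+ 2 + b ^+ 2) * (x ^+ 2 + y ^+ 2).
Proof. have := sqr_ge0 (a * y - b * x). nra. Qed.

Lemma pdist_lip B : \det B != 0 -> exists2 K : R, 0 < K &
  forall v w, v != 0 -> w != 0 -> pdist v w <= K * pdist (B *m v) (B *m w).
Proof.
move=> hB.
set N := B 0 0 ^+ 2 + B 0 1 ^+ 2 + (B 1 0 ^+ 2 + B 1 1 ^+ 2).
have hD2 : 0 < (\det B) ^+ 2 by apply: sq_gt0.
have hN : 0 < N.
  have hc := cs2 (B 0 0) (- B 0 1) (B 1 1) (B 1 0).
  move: hD2; rewrite det2 => hD2.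
  have e1 : (B 0 0 * B 1 1 - B 0 1 * B 1 0) ^+ 2 = (B 0 0 * B 1 1 + - B 0 1 * B 1 0) ^+ 2 by ring.
  have e2 : (- B 0 1) ^+ 2 = B 0 1 ^+ 2 by ring.
  rewrite -e1 e2 in hc.
  set U := B 0 0 ^+ 2 + B 0 1 ^+ 2 in hc *; set V := B 1 1 ^+ 2 + B 1 0 ^+ 2 in hc.
  have hU : 0 <= U by rewrite /U; have := sqr_ge0 (B 0 0); have := sqr_ge0 (B 0 1); lra.
  have hV : 0 <= V by rewrite /V; have := sqr_ge0 (B 1 1); have := sqr_ge0 (B 1 0); lra.
  have -> : N = U + V by rewrite /N /U /V; ring.
  rewrite lt_neqAle addr_ge0 // andbT; apply/eqP => h0.
  have hU0 : U = 0 by lra.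
  move: hc; rewrite hU0 mul0r; lra.
exists (N ^+ 2 / (\det B) ^+ 2); first by apply: divr_gt0 => //; apply: exprn_gt0.
move=> v w hv hw.
have hX := dot_gt0 hv; have hY := dot_gt0 hw.
have hP := dot_gt0 (mulmx_neq0 hB hv); have hQ := dot_gt0 (mulmx_neq0 hB hw).
have hPX : dot (B *m v) (B *m v) <= N * dot v v.
  rewrite !dotE !mulmxE2.
  have := cs2 (B 0 0) (B 0 1) (v 0 0) (v 1 0); have := cs2 (B 1 0) (B 1 1) (v 0 0) (v 1 0).
  rewrite /N; lra.
have hQY : dot (B *m w) (B *m w) <= N * dot w w.
  rewrite !dotE !mulmxE2.
  have := cs2 (B 0 0) (B 0 1) (w 0 0) (w 1 0); have := cs2 (B 1 0) (B 1 1) (w 0 0) (w 1 0).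
  rewrite /N; lra.
have hdet : \det (row_mx (B *m v) (B *m w)) = \det B * \det (row_mx v w).
  by rewrite !detrow det2 !mulmxE2; ring.
rewrite /pdist hdet.
set d := \det (row_mx v w).
set X := dot v v; set Y := dot w w; set P := dot (B *m v) (B *m v); set Q := dot (B *m w) (B *m w).
have -> : N ^+ 2 / \det B ^+ 2 * ((\det B * d) ^+ 2 / (P * Q)) = (N ^+ 2 * d ^+ 2) / (P * Q).
  by field; rewrite hB /= ?mulf_neq0 ?lt0r_neq0.
rewrite ler_pdivrMr ?mulr_gt0 // mulrAC ler_pdivlMr ?mulr_gt0 //.
have hd := sqr_ge0 d.
have hPQ : P * Q <= (N * X) * (N * Y).
  by apply: ler_pM; [exact: ltW hP | exact: ltW hQ | exact: hPX | exact: hQY].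
have -> : N ^+ 2 * d ^+ 2 * (X * Y) = d ^+ 2 * ((N * X) * (N * Y)) by ring.
exact: ler_wpM2l.
Qed.

Lemma pint_pres (C : pset R) B : \det B != 0 -> (forall x, C x -> C (B *m x)) ->
  forall x, pinterior C x -> pinterior C (B *m x).
Proof.
move=> hB hC x [hx [e he hint]].
have [K hK hL] := pdist_lip hB.
have hu : B \in unitmx by rewrite unitmxE unitfE.
split; first exact: mulmx_neq0.
exists (e / K); first by apply: divr_gt0.
move=> w hw hd.
have hw' : invmx B *m w != 0.
  apply: contraNneq hw => h. by rewrite -(mulKVmx hu w) h mulmx0.
rewrite -(mulKVmx hu w); apply: hC; apply: hint => //.
apply: (le_lt_trans (hL _ _ hx hw')).
rewrite mulKVmx //. by rewrite -ltr_pdivlMl // mulrC.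
Qed.

End Toolkit.

Section CLemmas.
Variable R : realType.
Variable C : pset R.
Hypothesis mc : multicone C.

Lemma C_neq0 x : C x -> x != 0.
Proof.
case: mc => [[s [_ hs]] _] /hs [pq _ [hx _]] //.
Qed.

Lemma C_scale x (c : R) : C x -> c != 0 -> C (c *: x).
Proof.
case: mc => [[s [_ hs]] _] /hs [pq hpq [hx [a [b [ha hb hab]]]]] hc.
apply/hs; exists pq => //; split; first by rewrite scaler_eq0 negb_or hc.
case: (ltrgt0P c) hc => // hc _.
- exists (c * a), (c * b); split; [exact: mulr_ge0 (ltW hc) ha | exact: mulr_ge0 (ltW hc) hb | ].
  case: hab => hab; [left | right].
    by rewrite hab scalerDr !scalerA.
  by rewrite -scalerN hab scalerDr !scalerA.
- have hc' : 0 <= - c by rewrite oppr_ge0 ltW.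
  exists (- c * a), (- c * b); split; [exact: mulr_ge0 hc' ha | exact: mulr_ge0 hc' hb | ].
  case: hab => hab; [right | left].
    by rewrite -scaleNr hab scalerDr !scalerA.
  have -> : c *: x = (- c) *: (- x) by rewrite scaleNr scalerN opprK.
  by rewrite hab scalerDr !scalerA.
Qed.

Lemma bd_of x : C x -> ~ pinterior C x -> pboundary C x.
Proof.
move=> hx hi; split => //; split; first exact: C_neq0.
move=> e he; exists x; split => //; first exact: C_neq0.
by rewrite pdist_self.
Qed.

Lemma bd_neq0 x : pboundary C x -> x != 0.
Proof. by case=> [[]]. Qed.

End CLemmas.

Section Semi.
Variable R : realType.
Variable Aset : mat R -> Prop.
Variable C : pset R.
Hypothesis mc : multicone C.
Hypothesis GL : forall A, Aset A -> \det A != 0.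
Hypothesis inv : minvariant Aset C.

Lemma sg_det S : semigroup Aset S -> \det S != 0.
Proof.
elim=> [A /GL //| A B _ hA _ hB]; by rewrite det_mulmx mulf_neq0.
Qed.

Lemma sg_pres S : semigroup Aset S -> forall x, C x -> C (S *m x).
Proof.
elim=> [A hA x hx | A B _ hA _ hB x hx]; first exact: inv.
by rewrite -mulmxA; apply: hA; apply: hB.
Qed.

Definition good (M : mat R) := exists c S, [/\ c != 0, semigroup Aset S & M = c *: S].

Lemma good_det M : good M -> \det M != 0.
Proof.
case=> c [S [hc hS ->]]; rewrite detZ mulf_neq0 ?expf_neq0 //.
exact: sg_det.
Qed.

Lemma good_pres M : good M -> forall x, C x -> C (M *m x).
Proof.
case=> c [S [hc hS ->]] x hx; rewrite -scalemxAl; apply: C_scale => //.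
exact: sg_pres.
Qed.

Lemma good_int M : good M -> forall x, pinterior C x -> pinterior C (M *m x).
Proof. move=> hM; apply: pint_pres; [exact: good_det | exact: good_pres]. Qed.

Lemma good_mul M N : good M -> good N -> good (M *m N).
Proof.
case=> c [S [hc hS ->]] [d [T [hd hT ->]]].
exists (c * d), (S *m T); split; first by rewrite mulf_neq0.
  exact: sg_mul.
by rewrite -scalemxAl -scalemxAr scalerA.
Qed.

Lemma good_A A : Aset A -> good A.
Proof. by move=> hA; exists 1, A; split; rewrite ?oner_neq0 ?scale1r //; constructor. Qed.

Lemma good_F F : Fset Aset F -> good F.
Proof.
elim=> [B [A [hA _] ->] | M N _ hM _ hN]; last exact: good_mul.
exists (Num.sqrt `|\det A|)^-1, A; split => //; last by constructor.
rewrite invr_neq0 // lt0r_neq0 // sqrtr_gt0 normr_gt0; exact: GL.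
Qed.

Lemma sg_pow A m : Aset A -> (0 < m)%N -> semigroup Aset (A ^+ m).
Proof.
move=> hA; elim: m => [// | [|m] IH _]; first by rewrite expr1; constructor.
by rewrite exprSr; apply: sg_mul; [apply: IH | constructor].
Qed.

End Semi.

Section Alg.
Variable R : realType.
Implicit Types (S : 'M[R]_2) (p q v w : 'cV[R]_2).

Definition mkv (x y : R) : 'cV[R]_2 := \col_(i < 2) (if i == 0 then x else y).
Lemma mkv0 x y : mkv x y 0 0 = x. Proof. by rewrite mxE. Qed.
Lemma mkv1 x y : mkv x y 1 0 = y. Proof. by rewrite mxE. Qed.

Lemma eq_by (a b c : R) : a - b = c -> c = 0 -> a = b.
Proof. by move=> h hc; apply/eqP; rewrite -subr_eq0 h hc. Qed.

Lemma eq_byN (a b c : R) : a - b = - c -> c = 0 -> a = b.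
Proof. by move=> h hc; apply/eqP; rewrite -subr_eq0 h hc oppr0. Qed.

Lemma root_eq S p (l : R) : p != 0 -> S *m p = l *: p ->
  l ^+ 2 - (S 0 0 + S 1 1) * l + (S 0 0 * S 1 1 - S 0 1 * S 1 0) = 0.
Proof.
move=> hp hS.
have h1 : S 0 0 * p 0 0 + S 0 1 * p 1 0 = l * p 0 0 by rewrite -mulmxE2 hS mxE.
have h2 : S 1 0 * p 0 0 + S 1 1 * p 1 0 = l * p 1 0 by rewrite -mulmxE2 hS mxE.
set f := _ + _.
have e0 : p 0 0 * f = (S 1 1 - l) * (S 0 0 * p 0 0 + S 0 1 * p 1 0 - l * p 0 0)
   - S 0 1 * (S 1 0 * p 0 0 + S 1 1 * p 1 0 - l * p 1 0) by rewrite /f; ring.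
have e1 : p 1 0 * f = - S 1 0 * (S 0 0 * p 0 0 + S 0 1 * p 1 0 - l * p 0 0)
   + (S 0 0 - l) * (S 1 0 * p 0 0 + S 1 1 * p 1 0 - l * p 1 0) by rewrite /f; ring.
rewrite h1 h2 !subrr !mulr0 subrr in e0; rewrite h1 h2 !subrr !mulr0 addr0 in e1.
case/vec_neq0: hp => h.
  by move/eqP: e0; rewrite mulf_eq0 (negbTE h) => /eqP.
by move/eqP: e1; rewrite mulf_eq0 (negbTE h) => /eqP.
Qed.

Lemma eigvec_other S (l m : R) :
  l ^+ 2 - (S 0 0 + S 1 1) * l + (S 0 0 * S 1 1 - S 0 1 * S 1 0) = 0 ->
  m = S 0 0 + S 1 1 - l -> m != l -> exists q, real_eigvec S m q.
Proof.
move=> hf hm hml.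
case: (boolP ((S 0 0 - l != 0) || (S 1 0 != 0))) => h.
  exists (mkv (S 0 0 - l) (S 1 0)); split.
    by apply: neq0_vec; rewrite mkv0 mkv1; case/orP: h; [left|right].
  apply: vecP2; rewrite mulmxE2 !mxE /= hm.
    by apply: (eq_byN _ hf); ring.
  by ring.
case: (boolP ((S 0 1 != 0) || (S 1 1 - l != 0))) => h'.
  exists (mkv (S 0 1) (S 1 1 - l)); split.
    by apply: neq0_vec; rewrite mkv0 mkv1; case/orP: h'; [left|right].
  apply: vecP2; rewrite mulmxE2 !mxE /= hm.
    by ring.
  by apply: (eq_byN _ hf); ring.
move: h h'; rewrite !negb_or !negbK => /andP [/eqP h1 /eqP h2] /andP [/eqP h3 /eqP h4].
move: hml; rewrite hm.
have -> : S 0 0 + S 1 1 - l = l + (S 0 0 - l) + (S 1 1 - l) by ring.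
by rewrite h1 h4 !addr0 eqxx.
Qed.

Lemma ker_col (a b x1 x2 y1 y2 : R) : a * x1 + b * x2 = 0 -> a * y1 + b * y2 = 0 ->
  (a != 0) || (b != 0) -> x1 * y2 - x2 * y1 = 0.
Proof.
move=> hx hy hab.
have ea : a * (x1 * y2 - x2 * y1) = y2 * (a * x1 + b * x2) - x2 * (a * y1 + b * y2) by ring.
have eb : b * (x1 * y2 - x2 * y1) = - y1 * (a * x1 + b * x2) + x1 * (a * y1 + b * y2) by ring.
rewrite hx hy !mulr0 subrr in ea; rewrite hx hy !mulr0 addr0 in eb.
case/orP: hab => h.
  by move/eqP: ea; rewrite mulf_eq0 (negbTE h) => /eqP.
by move/eqP: eb; rewrite mulf_eq0 (negbTE h) => /eqP.
Qed.

End Alg.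

Section Eig.
Variable R : realType.
Variable Aset : mat R -> Prop.
Variable C : pset R.
Hypothesis mc : multicone C.
Hypothesis GL : forall A, Aset A -> \det A != 0.
Hypothesis hXs : forall v, ~ (C v /\ Xs Aset v).
Hypothesis hXu : forall v, ~ (pboundary C v /\ Xu Aset v).
Hypothesis nopar : forall B, semigroup Aset B -> ~ parabolic B.

Lemma eig_sq S p (l : R) : semigroup Aset S -> C p -> pboundary C p -> S *m p = l *: p ->
  exists2 d : R, d != 0 & S *m S = d%:M.
Proof.
move=> hS hC hB hp.
have p0 : p != 0 := C_neq0 mc hC.
have hf := root_eq p0 hp.
have hD : S 0 0 * S 1 1 - S 0 1 * S 1 0 != 0 by have := sg_det GL hS; rewrite det2.
set m := S 0 0 + S 1 1 - l.
case: (ltrgtP `|l| `|m|) => hlm.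
- have hne : m != l by apply: contraTneq hlm => ->; rewrite ltxx.
  have [q hq] := eigvec_other hf (erefl m) hne.
  exfalso; apply: (hXs (v := p)); split => //.
  split => // e he; exists p; split => //; last by rewrite pdist_self.
  by exists S => //; exists l, m; split; [exact: hlm | by split | by exists q].
- have hne : m != l by apply: contraTneq hlm => ->; rewrite ltxx.
  have [q hq] := eigvec_other hf (erefl m) hne.
  exfalso; apply: (hXu (v := p)); split => //.
  split => // e he; exists p; split => //; last by rewrite pdist_self.
  by exists S => //; exists m, l; split; [exact: hlm | by exists q | by split].
- have hsq : l ^+ 2 = m ^+ 2.
    by rewrite -(real_normK (num_real l)) hlm real_normK ?num_real.
  have : (l - m) * (l + m) = 0.
    have -> : (l - m) * (l + m) = l ^+ 2 - m ^+ 2 by ring.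
    by rewrite hsq subrr.
  move/eqP; rewrite mulf_eq0 => /orP [] /eqP h.
  +
    have hlm' : l = m by apply/eqP; rewrite -subr_eq0 h.
    case: (boolP [&& S 0 0 == l, S 0 1 == 0, S 1 0 == 0 & S 1 1 == l]).
      case/and4P => /eqP e1 /eqP e2 /eqP e3 /eqP e4.
      exists (l ^+ 2).
        by move: hD; rewrite e1 e2 e3 e4 mulr0 subr0 -expr2.
      apply: matP2; rewrite mulmxE2 !mxE /= ?e1 ?e2 ?e3 ?e4; ring.
    move=> hnot; exfalso; apply: (nopar hS); split; first by exists p, l.
    move=> v w a b [v0 hv] [w0 hw].
    have ha := root_eq v0 hv; have hb := root_eq w0 hw.
    have ht : S 0 0 + S 1 1 = l + l by move: hlm'; rewrite /m => hh; lra.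
    have hDl : S 0 0 * S 1 1 - S 0 1 * S 1 0 = l ^+ 2.
      by apply: (eq_by _ hf); rewrite ht; ring.
    have sol : forall z : R, z ^+ 2 - (S 0 0 + S 1 1) * z + (S 0 0 * S 1 1 - S 0 1 * S 1 0) = 0 -> z = l.
      move=> z; rewrite ht hDl => hz.
      have : (z - l) ^+ 2 = 0 by rewrite -hz; ring.
      by move/eqP; rewrite expf_eq0 /= subr_eq0 => /eqP.
    have ea := sol _ ha; have eb := sol _ hb; subst a b.
    have rv0 : (S 0 0 - l) * v 0 0 + S 0 1 * v 1 0 = 0.
      apply: (eq_by (c := (S *m v) 0 0 - (l *: v) 0 0)); [rewrite mulmxE2 !mxE; ring | by rewrite hv subrr].
    have rv1 : S 1 0 * v 0 0 + (S 1 1 - l) * v 1 0 = 0.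
      apply: (eq_by (c := (S *m v) 1 0 - (l *: v) 1 0)); [rewrite mulmxE2 !mxE; ring | by rewrite hv subrr].
    have rw0 : (S 0 0 - l) * w 0 0 + S 0 1 * w 1 0 = 0.
      apply: (eq_by (c := (S *m w) 0 0 - (l *: w) 0 0)); [rewrite mulmxE2 !mxE; ring | by rewrite hw subrr].
    have rw1 : S 1 0 * w 0 0 + (S 1 1 - l) * w 1 0 = 0.
      apply: (eq_by (c := (S *m w) 1 0 - (l *: w) 1 0)); [rewrite mulmxE2 !mxE; ring | by rewrite hw subrr].
    rewrite /collinear detrow.
    case: (boolP ((S 0 0 - l != 0) || (S 0 1 != 0))) => h0.
      exact: ker_col rv0 rw0 h0.
    case: (boolP ((S 1 0 != 0) || (S 1 1 - l != 0))) => h1.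
      exact: ker_col rv1 rw1 h1.
    move: h0 h1 hnot; rewrite !negb_or !negbK !subr_eq0.
    by case/andP => -> -> /andP [-> ->].
  +
    have ht : S 0 0 + S 1 1 = 0 by rewrite -h /m; ring.
    exists (- (S 0 0 * S 1 1 - S 0 1 * S 1 0)); first by rewrite oppr_eq0.
    have e4 : S 1 1 = - S 0 0 by apply/eqP; rewrite -subr_eq0 opprK addrC ht.
    apply: matP2; rewrite mulmxE2 !mxE /= ?e4; ring.
Qed.

End Eig.

Section Conf.
Variable R : realType.
Local Open Scope complex_scope.

Lemma conf_pow (A : 'M[R]_2) N (d : R) : (0 < N)%N -> A ^+ N = d%:M -> conformal A.
Proof.
move=> hN hA.
set g := map_mx (fun x : R => x%:C) A.
have hg : g ^+ N = (d%:C)%:M.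
  have -> : g = map_mx (real_complex R) A by [].
  rewrite -rmorphXn hA; apply/matrixP => i j; rewrite !mxE; by case: (i == j).
have key : forall l, ceig A l -> l ^+ N = d%:C.
  move=> l /eigenvalueP [v hv v0].
  have hpow : forall k, v *m g ^+ k = l ^+ k *: v.
    elim=> [|k IH]; first by rewrite !expr0 mulmx1 scale1r.
    by rewrite exprSr mulmxA IH -scalemxAl hv scalerA -exprSr.
  have := hpow N; rewrite hg mul_mx_scalar => /eqP.
  rewrite -subr_eq0 -scalerBl scaler_eq0 (negbTE v0) orbF subr_eq0 => /eqP.
  by move=> ->.
move=> l m hl hm.
have e : `|l| ^+ N = `|m| ^+ N by rewrite -!normrX (key _ hl) (key _ hm).
by apply/eqP; rewrite -(eqrXn2 hN) ?normr_ge0 // e.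
Qed.

End Conf.

Section Pigeon.
Variable R : realType.

Lemma pigeon (P : pset R) k (z : nat -> vec R) : pcard P k -> (forall v, P v -> v != 0) ->
  (forall t, (t <= k)%N -> P (z t)) ->
  exists a b, [/\ (a < b)%N, (b <= k)%N & collinear (z a) (z b)].
Proof.
move=> [s [hsz hin _ hcov]] hP0 hz.
pose f t := find (fun u => \det (row_mx (z t) u) == 0) s.
have hf : forall t, (t <= k)%N -> (f t < k)%N /\ collinear (z t) (nth 0 s (f t)).
  move=> t ht; have [w ws hw] := hcov _ (hz t ht).
  have hh : has (fun u => \det (row_mx (z t) u) == 0) s by apply/hasP; exists w => //; apply/eqP.
  split; first by rewrite -hsz -has_find.
  by apply/eqP; exact: (nth_find 0 hh).
pose L := map f (iota 0 k.+1).
have : ~~ uniq L.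
  apply/negP => hu.
  have := @uniq_leq_size _ L (iota 0 k) hu.
  rewrite size_map !size_iota ltnn => H; suff: false by []; apply: H.
  move=> x /mapP [t]; rewrite mem_iota add0n ltnS /= => ht ->.
  by rewrite mem_iota add0n /=; case: (hf t ht).
case/(uniqPn 0%N) => i [j [hij hj]].
rewrite size_map size_iota in hj.
rewrite !(nth_map 0%N) ?size_iota ?(ltn_trans hij) // !nth_iota ?(ltn_trans hij) // !add0n => eij.
have hik : (i <= k)%N by rewrite -ltnS (ltn_trans hij).
have hjk : (j <= k)%N by rewrite -ltnS.
exists i, j; split => //.
have [hi1 hi2] := hf i hik; have [_ hj2] := hf j hjk.
rewrite eij in hi2.
apply: collinear_trans hi2 hj2 _.
apply: hP0; apply: hin; apply: mem_nth; rewrite hsz.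
by case: (hf j hjk).
Qed.

End Pigeon.

Unset Implicit Arguments. Set Strict Implicit.

Theorem lemma3p8 (R : realType) (Aset : mat R -> Prop) (C : pset R)
  (GL : forall A, Aset A -> \det A != 0)
  (inv : minvariant Aset C)
  (unst : unstable_multicone Aset C)
  (nopar : forall B, semigroup Aset B -> ~ parabolic B) :
  forall k : nat, pcard (pboundary C) k ->
  forall (n : nat), (k ^ 2 + 1 <= n)%N ->
  forall (A F : 'I_n -> mat R),
    (forall i, Aset (A i) /\ ~ conformal (A i)) ->
    (forall i, Fset Aset (F i)) ->
    forall v, C v -> pinterior C ((\prod_(i < n) (A i *m F i)) *m v).
Proof.
move=> k hk n hn A F hA hF v hv.
case: unst => mc _ hXs hXu _.
have hkn : (k <= n)%N.
  apply: leq_trans hn; apply: leq_trans (leq_addr 1 _).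
  case: k {hk} => // k; rewrite expnS expn1; exact: leq_pmull.
case: n hn A F hA hF hkn => [|n] hn A F hA hF hkn; first by rewrite addn1 in hn.
pose G (j : nat) : mat R := A (inord j) *m F (inord j).
pose Pr (i j : nat) : mat R := \prod_(i <= l < j) G l.
have -> : \prod_(i < n.+1) (A i *m F i) = Pr 0%N n.+1.
  rewrite /Pr big_mkord; apply: eq_bigr => i _; by rewrite /G inord_val.
have hG : forall j, good Aset (G j).
  move=> j; rewrite /G; apply: good_mul; [exact: good_A (hA _).1 | exact: (@good_F R Aset GL (F (inord j)) (hF (inord j)))].
have hPgood : forall i d, good Aset (Pr i (i + d.+1)%N).
  move=> i; elim=> [|d IH]; first by rewrite /Pr addn1 big_nat1.
  by rewrite /Pr addnS big_nat_recr /= ?leq_addr //; apply: good_mul.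
have hPgood' : forall i j, (i < j)%N -> good Aset (Pr i j).
  move=> i j hij; have := hPgood i (j - i.+1)%N.
  by rewrite addnS -addSn subnKC.
have hPpres : forall i j, (i <= j)%N -> forall x, C x -> C (Pr i j *m x).
  move=> i j; rewrite leq_eqVlt => /orP [/eqP <- | hij] x hx.
    by rewrite /Pr big_geq // mul1mx.
  exact: (good_pres mc inv (hPgood' _ _ hij) hx).
have hPint : forall i j, (i <= j)%N -> forall x, pinterior C x -> pinterior C (Pr i j *m x).
  move=> i j; rewrite leq_eqVlt => /orP [/eqP <- | hij] x hx.
    by rewrite /Pr big_geq // mul1mx.
  exact: (good_int mc GL inv (hPgood' _ _ hij) hx).
have hPcat : forall i j l, (i <= j)%N -> (j <= l)%N -> Pr i l = Pr i j *m Pr j l.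
  by move=> i j l hij hjl; rewrite /Pr (big_cat_nat hij hjl).
pose W (j : nat) := Pr j n.+1 *m v.
have hWcat : forall i j, (i <= j)%N -> (j <= n.+1)%N -> W i = Pr i j *m W j.
  by move=> i j hij hjn; rewrite /W mulmxA -hPcat.
have hWC : forall j, (j <= n.+1)%N -> C (W j).
  by move=> j hj; apply: hPpres.
apply: NNPP => hni.
have hWni : forall j, (j <= n.+1)%N -> ~ pinterior C (W j).
  move=> j hj hint; apply: hni.
  have -> : Pr 0%N n.+1 *m v = W 0%N by [].
  by rewrite (hWcat 0%N j) //; apply: hPint.
have hWbd : forall j, (j <= n.+1)%N -> pboundary C (W j).
  by move=> j hj; apply: bd_of => //; [apply: hWC | apply: hWni].
have hbd0 : forall x, pboundary C x -> x != 0 by move=> x; apply: bd_neq0.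
have [a [b [hab hbk hcol]]] := pigeon hk hbd0 (fun t ht => hWbd t (leq_trans ht hkn)).
have hbn : (b <= n.+1)%N by apply: leq_trans hbk hkn.
have Wb0 : W b != 0 by apply: hbd0; apply: hWbd.
have [c [S [hc hS hPS]]] := hPgood' _ _ hab.
have [kap hkap] := collinear_scale hcol Wb0.
have hSW : S *m W b = (c^-1 * kap) *: W b.
  have eWa := hWcat a b (ltnW hab) hbn.
  rewrite -scalerA -hkap eWa hPS -scalemxAl scalerA mulVf // scale1r //.
have [d hd hSS] := eig_sq mc GL hXs hXu nopar hS (hWC _ hbn) (hWbd _ hbn) hSW.
have hPP : Pr a b *m Pr a b = (c * c * d)%:M.
  by rewrite hPS -scalemxAl -scalemxAr hSS !scale_scalar_mx mulrA.
have he : c * c * d != 0 by rewrite !mulf_neq0.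
pose a' : 'I_n.+1 := inord a.
pose A' := A a'.
pose Y := F a' *m Pr a.+1 b.
have hdec : Pr a b = A' *m Y.
  by rewrite /Pr big_ltn // /G mulmxA.
have hY : forall x, C x -> C (Y *m x).
  move=> x hx; rewrite /Y -mulmxA.
  apply: (good_pres mc inv (@good_F R Aset GL (F a') (hF a'))).
  exact: hPpres.
have hAu : A' \in unitmx by rewrite unitmxE unitfE; apply: GL; exact: (hA a').1.
have surj : forall x, C x -> C (invmx A' *m x).
  move=> x hx.
  pose y := (c * c * d)^-1 *: (Pr a b *m x).
  have hy : C y by apply: C_scale => //; [apply: hPpres => //; exact: ltnW | rewrite invr_neq0].
  have hxy : x = A' *m (Y *m y).
    rewrite mulmxA -hdec /y -scalemxAr mulmxA hPP mul_scalar_mx scalerA mulVf //.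
    by rewrite scale1r.
  by rewrite hxy mulKmx //; apply: hY.
pose Ai := invmx A'.
pose z (t : nat) := Ai ^+ t *m W b.
have hzS : forall t, z t.+1 = Ai *m z t.
  by move=> t; rewrite /z exprS [RHS]mulmxA.
have hzC : forall t, C (z t).
  elim=> [|t IH]; first by rewrite /z expr0 mul1mx; apply: hWC.
  by rewrite hzS; apply: surj.
have hzni : forall t, ~ pinterior C (z t).
  elim=> [|t IH]; first by rewrite /z expr0 mul1mx; apply: hWni.
  move=> hint; apply: IH.
  have -> : z t = A' *m z t.+1 by rewrite hzS mulKVmx.
  exact: (good_int mc GL inv (good_A (hA a').1) hint).
have hzbd : forall t, pboundary C (z t) by move=> t; apply: bd_of => //.
have [a2 [b2 [hab2 hbk2 hcol2]]] := pigeon hk hbd0 (fun t _ => hzbd t).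
set mm := (b2 - a2)%N.
have hmm : (0 < mm)%N by rewrite subn_gt0.
have hzb : z b2 = Ai ^+ mm *m z a2.
  rewrite /z mulmxA; congr (_ *m _).
  change (Ai ^+ b2 = Ai ^+ mm * Ai ^+ a2).
  by rewrite -exprD /mm subnK // ltnW.
have hpow : forall m (x : 'cV[R]_2), A' ^+ m *m (Ai ^+ m *m x) = x.
  elim=> [|m IH] x; first by rewrite !expr0 !mul1mx.
  by rewrite exprSr exprS -!mulmxA (mulmxA A') mulmxV // mul1mx IH.
have zb0 : z b2 != 0 by apply: hbd0.
have [kap2 hkap2] := collinear_scale hcol2 zb0.
have hAz : A' ^+ mm *m z b2 = kap2 *: z b2 by rewrite {1}hzb hpow.
have [d2 hd2 hSS2] := eig_sq mc GL hXs hXu nopar (sg_pow (hA a').1 hmm) (hzC b2) (hzbd b2) hAz.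
apply: (hA a').2.
apply: (conf_pow (N := (mm + mm)%N) (d := d2)); first by rewrite addn_gt0 hmm.
by rewrite exprD.
Qed.
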